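(* Let $c_r>0$, $c_e>0$, and let $\mu$ be a finite (nonnegative) measure on $\mathbb{R}$. For closed intervals $I,J\subseteq\mathbb{R}$ (range conditions on a fixed indexed attribute), define the merge function $M(I,J)$ to be the interval hull $I\oplus J=[\min(\inf I,\inf J),\max(\sup I,\sup J)]$ if $I\cap J\neq\emptyset$ and $\mu(I\cap J)\,(c_r+c_e)>c_e\,\mu(I\cup J)$, and $M(I,J)=\emptyset$ otherwise. Let $x,y,z$ be closed intervals such that $x\cap y\neq\emptyset$, $M(x,y)=\emptyset$, $M(y,z)\neq\emptyset$ (so the merged candidate $y\oplus z$ exists), and $x\cap z=\emptyset$. Then $M(x,y\oplus z)=\emptyset$.
   Context: Candidate guards are range conditions $a\in[v_1,v_2]$ on an indexed attribute $a$, identified with closed intervals. $\mu(S)$ denotes the estimated number of tuples whose value of $a$ lies in $S$. $c_r$ is the cost of reading a tuple and $c_e$ the cost of evaluating one policy's object conditions on a tuple. The function $M$ decides whether merging two overlapping candidate guards into their interval hull is beneficial, via the condition $\mu(I\cap J)/\mu(I\cup J)>c_e/(c_r+c_e)$ (written multiplicatively above). *)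

(* Defs.v *)
From HB Require Import structures.
From mathcomp Require Import all_boot all_order all_algebra.
From mathcomp Require Import all_classical all_reals all_analysis.
Set Implicit Arguments. Unset Strict Implicit. Unset Printing Implicit Defensive.
Import Order.TTheory GRing.Theory Num.Theory.
Local Open Scope classical_set_scope.
Local Open Scope ring_scope.

(* A closed interval [v1, v2] is represented by the pair (v1, v2); the
   hypothesis v1 <= v2 is imposed in the theorem. *)
Definition itv (R : realType) (p : R * R) : set R := `[p.1, p.2].

Definition hull (R : realType) (p q : R * R) : R * R :=
  (Order.min p.1 q.1, Order.max p.2 q.2).

Definition merge_cond (R : realType) (mu : set R -> \bar R) (cr ce : R)
  (p q : R * R) : Prop :=
  (itv p `&` itv q !=set0) /\
  (ce%:E * mu (itv p `|` itv q) < mu (itv p `&` itv q) * (cr + ce)%:E)%E.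

Definition gmerge (R : realType) (mu : set R -> \bar R) (cr ce : R)
  (p q : R * R) : set R :=
  if `[< merge_cond mu cr ce p q >] then itv (hull p q) else set0.

(* Main.v *)
Require Import Defs.
From HB Require Import structures.
From mathcomp Require Import all_boot all_order all_algebra.
From mathcomp Require Import all_classical all_reals all_analysis.
Import Order.TTheory GRing.Theory Num.Theory.
Local Open Scope classical_set_scope.
Local Open Scope ring_scope.

Lemma itvE (R : realType) (p : R * R) t : itv p t <-> p.1 <= t <= p.2.
Proof. by rewrite /itv /= in_itv /=; split. Qed.

Lemma itv_meas (R : realType) (p : R * R) : measurable (itv p).
Proof. exact: measurable_itv. Qed.

Theorem corollary1 (R : realType) (mu : {finite_measure set R -> \bar R})
  (cr ce : R) (hcr : 0 < cr) (hce : 0 < ce) (x y z : R * R)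
  (hx : x.1 <= x.2) (hy : y.1 <= y.2) (hz : z.1 <= z.2) :
  itv x `&` itv y !=set0 ->
  gmerge (mu : set R -> \bar R) cr ce x y = set0 ->
  gmerge (mu : set R -> \bar R) cr ce y z !=set0 ->
  itv x `&` itv z = set0 ->
  gmerge (mu : set R -> \bar R) cr ce x (hull y z) = set0.
Proof.
move=> hxy hm hyz hxz.
have nxy : ~ merge_cond mu cr ce x y.
  move=> hc; move: hm; rewrite /gmerge asboolT // => /(congr1 (fun S => S x.1)).
  rewrite /= => <-; apply/itvE; rewrite /hull /=.
  by rewrite ge_min lexx /= le_max hx.
have cyz : merge_cond mu cr ce y z.
  apply: contrapT => hc; move: hyz; rewrite /gmerge asboolF //.
  by case=> ? [].
case: cyz => [[w [/itvE /andP [wy1 wy2] /itvE /andP [wz1 wz2]]] _].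
have eqI : itv x `&` itv (hull y z) = itv x `&` itv y.
  apply/seteqP; split => t [tx]; last first.
    move=> /itvE /andP [t1 t2]; split => //; apply/itvE.
    by rewrite /hull /= ge_min t1 /= le_max t2.
  move=> /itvE; rewrite /hull /= ge_min le_max => /andP [h1 h2].
  split => //; apply/itvE.
  have tz : ~ itv z t by move=> tz; have : (itv x `&` itv z) t by [];
    rewrite hxz.
  case/orP: h1 => h1; case/orP: h2 => h2.
  - by rewrite h1 h2.
  - rewrite h1 /= leNgt; apply/negP => lt; apply: tz; apply/itvE.
    by rewrite h2 andbT (le_trans wz1 (le_trans wy2 (ltW lt))).
  - rewrite h2 andbT leNgt; apply/negP => lt; apply: tz; apply/itvE.
    by rewrite h1 /= (le_trans (ltW lt) (le_trans wy1 wz2)).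
  - by exfalso; apply: tz; apply/itvE; rewrite h1 h2.
have sU : itv x `|` itv y `<=` itv x `|` itv (hull y z).
  apply: setUS => t /itvE /andP [t1 t2]; apply/itvE.
  by rewrite /hull /= ge_min t1 /= le_max t2.
rewrite /gmerge asboolF //; case => _; rewrite eqI.
have : ~ (ce%:E * mu (itv x `|` itv y) < mu (itv x `&` itv y) * (cr + ce)%:E)%E.
  by move=> h; apply: nxy; split.
move/negP; rewrite -leNgt => h1 h2.
have : (ce%:E * mu (itv x `|` itv y) <= ce%:E * mu (itv x `|` itv (hull y z)))%E.
  apply: lee_wpmul2l; first by rewrite lee_fin ltW.
  by apply: le_measure => //; rewrite inE; apply: measurableU; apply: itv_meas.
move=> h3.
by move: (lt_le_trans h2 (le_trans h1 h3)); rewrite ltxx.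
Qed.
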